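(* Let $\mathbf A$ be a residuated semigroup satisfying $1_xy=y1_x$ for all $x,y$, where $1_x:=x/x$. Consider the conditions (each required for all $x,y\in A$): (H1) if $1_x=1_y$ then $1_{xy}=1_x$; (H2) if $1_x=1_y$ then $1_{x/y}=1_x$; (H3) if $1_x=1_y$ then $1_{x\backslash y}=1_x$. Then each of (H2) and (H3) implies that $x\backslash x=x/x$ for all $x\in A$; moreover (H2) and (H3) are equivalent, and (H2) implies (H1).
   Context: A residuated semigroup is a structure $\langle A,\le,\cdot,\backslash,/\rangle$ where $\langle A,\le\rangle$ is a poset, $\langle A,\cdot\rangle$ is a semigroup (we write $xy$ for $x\cdot y$), and for all $x,y,z$: $xy\le z\iff x\le z/y\iff y\le x\backslash z$. *)

(* Defs.v *)
Record RSG := {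
  car :> Type;
  le : car -> car -> Prop;
  mul : car -> car -> car;
  ldiv : car -> car -> car;
  rdiv : car -> car -> car;
  le_refl : forall x, le x x;
  le_antisym : forall x y, le x y -> le y x -> x = y;
  le_trans : forall x y z, le x y -> le y z -> le x z;
  mul_assoc : forall x y z, mul (mul x y) z = mul x (mul y z);
  res_r : forall x y z, le (mul x y) z <-> le x (rdiv z y);
  res_l : forall x y z, le (mul x y) z <-> le y (ldiv x z)
}.

Definition one_ {A : RSG} (x : A) : A := rdiv A x x.

Definition H1 (A : RSG) : Prop :=
  forall x y : A, one_ x = one_ y -> one_ (mul A x y) = one_ x.
Definition H2 (A : RSG) : Prop :=
  forall x y : A, one_ x = one_ y -> one_ (rdiv A x y) = one_ x.
Definition H3 (A : RSG) : Prop :=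
  forall x y : A, one_ x = one_ y -> one_ (ldiv A x y) = one_ x.

(* Main.v *)
Require Import Defs.
From Stdlib Require Import Setoid.

Section S.
Variable A : RSG.
Variable hcomm : forall x y : A, mul A (one_ x) y = mul A y (one_ x).

Local Notation "a <= b" := (le A a b).
Local Notation "a * b" := (mul A a b).
Local Notation "a / b" := (rdiv A a b).
Local Notation "a \ b" := (ldiv A a b) (at level 40, left associativity).

Lemma rdiv_le (z y : A) : (z / y) * y <= z.
Proof. apply (proj2 (res_r A _ _ _)). apply le_refl. Qed.
Lemma ldiv_le (x z : A) : x * (x \ z) <= z.
Proof. apply (proj2 (res_l A _ _ _)). apply le_refl. Qed.
Lemma mono_l (a b c : A) : a <= b -> c * a <= c * b.
Proof. intro h. apply (proj2 (res_l A _ _ _)).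
  apply le_trans with b; [exact h|]. apply (proj1 (res_l A _ _ _)); apply le_refl. Qed.
Lemma mono_r (a b c : A) : a <= b -> a * c <= b * c.
Proof. intro h. apply (proj2 (res_r A _ _ _)).
  apply le_trans with b; [exact h|]. apply (proj1 (res_r A _ _ _)); apply le_refl. Qed.
Lemma ltr (a b c : A) : a * b <= c -> a <= c / b.
Proof. apply (proj1 (res_r A _ _ _)). Qed.
Lemma ltl (a b c : A) : a * b <= c -> b <= a \ c.
Proof. apply (proj1 (res_l A _ _ _)). Qed.
Lemma one_l (x : A) : one_ x * x <= x.
Proof. apply rdiv_le. Qed.
Lemma one_r (x : A) : x * one_ x <= x.
Proof. rewrite <- hcomm. apply one_l. Qed.
Lemma tr (a b c : A) : a <= b -> b <= c -> a <= c.
Proof. apply le_trans. Qed.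
Lemma ass (a b c : A) : a * b * c = a * (b * c).
Proof. apply mul_assoc. Qed.

Lemma one_le_u (x : A) : one_ x <= x \ x.
Proof. apply ltl. apply one_r. Qed.

Lemma W_eq (x : A) : one_ (one_ x) = one_ x -> x \ x = one_ x.
Proof.
  intro W. set (e := one_ x) in *. set (u := x \ x). set (f := one_ u).
  assert (uf : u <= f).
  { apply ltr. apply ltl. rewrite <- ass.
    apply tr with (x * u). apply mono_r, ldiv_le. apply ldiv_le. }
  assert (fe : f <= e).
  { assert (H : f * e <= e).
    { apply ltr. rewrite ass.
      assert (E1 : e * x = x * e) by (apply hcomm).
      assert (E2 : f * x = x * f) by (apply hcomm).
      rewrite E1, <- ass, E2, ass.
      apply tr with (x * u); [|apply ldiv_le].
      apply mono_l. apply tr with (f * u).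
      apply mono_l. apply one_le_u. apply rdiv_le. }
    rewrite <- W. change (f <= e / e). apply ltr. exact H. }
  apply le_antisym. apply tr with f; assumption. apply one_le_u.
Qed.

Lemma uf_lem (x : A) : x \ x <= one_ (x \ x).
Proof. apply ltr. apply ltl. rewrite <- ass.
  apply tr with (x * (x \ x)). apply mono_r, ldiv_le. apply ldiv_le. Qed.

Lemma H2_W (h : H2 A) (x : A) : one_ (one_ x) = one_ x.
Proof. exact (h x x eq_refl). Qed.

Lemma H3_eq (h : H3 A) (x : A) : x \ x = one_ x.
Proof.
  apply le_antisym; [|apply one_le_u].
  rewrite <- (h x x eq_refl). apply uf_lem.
Qed.

Lemma H2_H1 (h : H2 A) : H1 A.
Proof.
  intros x y hxy. set (e := one_ x). set (g := one_ (x * y)).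
  assert (Ee : one_ e = e) by (apply H2_W; exact h).
  set (c := e / x).
  assert (Ec : one_ c = e).
  { unfold c. rewrite <- Ee at 2. apply h. rewrite Ee. reflexivity. }
  apply le_antisym.
  - rewrite <- Ec. change (g <= c / c). apply ltr.
    unfold c at 2. apply ltr.
    assert (Hy : e = y / y) by (exact hxy).
    rewrite Hy. apply ltr.
    assert (E2 : g * c = c * g) by apply hcomm.
    rewrite E2, !ass.
    apply tr with (c * (x * y)).
    + apply mono_l. apply rdiv_le.
    + rewrite <- ass. apply tr with (e * y). apply mono_r, rdiv_le.
      rewrite Hy. apply rdiv_le.
  - apply ltr. rewrite <- ass. apply mono_r. apply one_l.
Qed.

Lemma H2_H3 (h : H2 A) : H3 A.
Proof.
  assert (eqx : forall x : A, x \ x = one_ x) by (intro; apply W_eq, H2_W, h).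
  intros x y hxy. set (e := one_ x). set (z := x \ y). set (f := one_ z).
  assert (Ee : one_ e = e) by (apply H2_W; exact h).
  set (c := e / x).
  assert (Ec : one_ c = e).
  { unfold c. rewrite <- Ee at 2. apply h. rewrite Ee. reflexivity. }
  assert (Hy : e = y / y) by (exact hxy).
  assert (ey : e * y <= y) by (rewrite Hy at 1; apply rdiv_le).
  assert (xe : x * e <= x) by apply one_r.
  assert (xc : x * c <= e).
  { apply ltr. rewrite ass. apply tr with (x * e); [|exact xe].
    apply mono_l. apply rdiv_le. }
  assert (cy : c * y <= z).
  { apply ltl. rewrite <- ass. apply tr with (e * y); [|exact ey]. apply mono_r. exact xc. }
  assert (fxz : f * x * z <= y).
  { assert (E2 : f * x = x * f) by apply hcomm. rewrite E2, ass.
    apply tr with (x * z); [|apply ldiv_le]. apply mono_l. apply rdiv_le. }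
  assert (fxc : f * x * c <= e).
  { rewrite Hy. apply ltr. rewrite ass. apply tr with (f * x * z); [|exact fxz].
    apply mono_l. exact cy. }
  assert (dc : x \ e <= c).
  { apply ltr. apply tr with (x \ x); [|rewrite eqx; apply le_refl]. apply ltl. rewrite <- ass.
    apply tr with (e * x). apply mono_r, ldiv_le. apply one_l. }
  apply le_antisym.
  - rewrite <- Ec. change (f <= c / c). apply ltr.
    apply tr with (x \ e); [|exact dc]. apply ltl.
    rewrite <- ass. assert (E2 : f * x = x * f) by apply hcomm. rewrite <- E2. exact fxc.
  - apply ltr. apply ltl. rewrite <- ass.
    assert (E2 : x * e = e * x) by (symmetry; apply hcomm). rewrite E2, ass.
    apply tr with (e * y); [|exact ey]. apply mono_l, ldiv_le.
Qed.

Lemma H3_H2 (h : H3 A) : H2 A.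
Proof.
  assert (eqx : forall x : A, x \ x = one_ x) by (intro; apply H3_eq, h).
  intros x y hxy. set (e := one_ x). set (z := x / y). set (f := one_ z).
  assert (Hy : e = one_ y) by exact hxy.
  assert (Ee : one_ (one_ y) = one_ y).
  { rewrite <- (eqx y) at 1. apply h. reflexivity. }
  set (c := y \ e).
  assert (Ec : one_ c = e).
  { unfold c. rewrite Hy. apply h. symmetry. exact Ee. }
  assert (ey : e * y <= y) by (rewrite Hy; apply one_l).
  assert (ye : y * e <= y) by (rewrite Hy; apply one_r).
  assert (ex : e * x <= x) by apply one_l.
  assert (xe : x * e <= x) by apply one_r.
  assert (cy : c * y <= e).
  { rewrite Hy, <- (eqx y). apply ltl. rewrite <- ass.
    apply tr with (e * y); [|exact ey]. apply mono_r, ldiv_le. }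
  assert (xcz : x * c <= z).
  { apply ltr. rewrite ass. apply tr with (x * e); [|exact xe]. apply mono_l, cy. }
  assert (zyf : z * (y * f) <= x).
  { assert (E2 : y * f = f * y) by (symmetry; apply hcomm). rewrite E2, <- ass.
    apply tr with (z * y); [|apply rdiv_le]. apply mono_r.
    assert (E3 : z * f = f * z) by (symmetry; apply hcomm). rewrite E3. apply rdiv_le. }
  assert (cyf : c * (y * f) <= e).
  { unfold e. rewrite <- (eqx x). apply ltl. rewrite <- ass.
    apply tr with (z * (y * f)); [|exact zyf]. apply mono_r, xcz. }
  assert (ed : e / y <= c).
  { apply ltl. apply tr with (y / y); [|change (y / y) with (one_ y); rewrite <- Hy; apply le_refl].
    apply ltr. rewrite ass. apply tr with (y * e); [|exact ye].
    apply mono_l, rdiv_le. }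
  apply le_antisym.
  - rewrite <- Ec, <- (eqx c). apply ltl.
    apply tr with (e / y); [|exact ed]. apply ltr.
    rewrite ass. assert (E2 : f * y = y * f) by apply hcomm. rewrite E2. exact cyf.
  - apply ltr. apply ltr. rewrite ass.
    apply tr with (e * x); [|exact ex]. apply mono_l, rdiv_le.
Qed.
End S.

Theorem proposition3p4 (A : RSG)
  (hcomm : forall x y : A, mul A (one_ x) y = mul A y (one_ x)) :
  (H2 A -> forall x : A, ldiv A x x = rdiv A x x) /\
  (H3 A -> forall x : A, ldiv A x x = rdiv A x x) /\
  (H2 A <-> H3 A) /\
  (H2 A -> H1 A).
Proof.
  split; [|split; [|split]].
  - intros h x. apply (W_eq A hcomm). apply H2_W, h.
  - intros h x. apply (H3_eq A hcomm), h.
  - split; [apply (H2_H3 A hcomm) | apply (H3_H2 A hcomm)].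
  - apply (H2_H1 A hcomm).
Qed.
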